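(* Let $\lambda>0$, $\lambda_{max}>0$, $p\in(0,1)$. Suppose $P_b\in[0,1)$ satisfies $$P_b=1-\exp\!\Big(-\frac{\lambda(1-P_b)\,r}{\lambda_{max}}\Big),\qquad r=\min\Big\{\frac{p}{1-P_b},1\Big\}.$$ If $\frac{-\lambda_{max}\ln p}{\lambda}>p$, then $P_b=1-\exp\!\big(-\frac{p\lambda}{\lambda_{max}}\big)$. Otherwise, $P_b$ satisfies $P_b=1-\exp\!\big(-\frac{\lambda(1-P_b)}{\lambda_{max}}\big)$.
   Context: CSMA model: packets arrive as a Poisson process and are assigned to transmitters uniformly located in a large area, yielding (in the limit) transmitter density $\lambda$ in $\mathbb{R}^2$; each receiver is at distance $d$ from its transmitter, path-loss exponent $\alpha>2$, Rayleigh fading, SIR threshold $\theta$, and $\lambda_{max}=\frac{1}{d^2\theta^{2/\alpha}\kappa(\alpha)}$ with $\kappa(\alpha)=\frac{2\pi^2}{\alpha\sin(2\pi/\alpha)}$. A transmitter sends (with unit power) if its sensed SIR exceeds $\theta$ and its battery (infinite capacity, one energy unit arriving per slot with probability $p$, i.i.d.) is nonempty; otherwise it backs off. $P_b$ is the back-off probability and $r$ the stationary probability of a nonempty battery. Under the modeling approximation that back-off events of different transmitters are independent, so that active transmitters form a Poisson point process of density $\lambda(1-P_b)r$, the back-off probability is a number $P_b\in[0,1)$ satisfying the displayed fixed-point equation. *)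

(* Defs.v *)
From Stdlib Require Import Reals.
Open Scope R_scope.

Definition battery_r (p Pb : R) : R := Rmin (p / (1 - Pb)) 1.

(* Main.v *)
Require Import Defs.
From Stdlib Require Import Reals Lra.
Open Scope R_scope.

Theorem theorem5 (lambda lambda_max p Pb : R)
  (Hl : 0 < lambda) (Hlm : 0 < lambda_max) (Hp0 : 0 < p) (Hp1 : p < 1)
  (HPb0 : 0 <= Pb) (HPb1 : Pb < 1)
  (Hfix : Pb = 1 - exp (- (lambda * (1 - Pb) * battery_r p Pb / lambda_max))) :
  (- lambda_max * ln p / lambda > p ->
     Pb = 1 - exp (- (p * lambda / lambda_max))) /\
  (~ (- lambda_max * ln p / lambda > p) ->
     Pb = 1 - exp (- (lambda * (1 - Pb) / lambda_max))).
Proof.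
  assert (Hx : 0 < 1 - Pb) by lra.
  assert (Hc : forall c, - lambda_max * ln p / lambda > c <-> - ln p > c * lambda / lambda_max).
  { intro c.
    assert (E1 : - lambda_max * ln p / lambda = (lambda_max / lambda) * (- ln p)) by (field; lra).
    assert (E2 : c = (lambda_max / lambda) * (c * lambda / lambda_max)) by (field; lra).
    assert (Hk : 0 < lambda_max / lambda) by (apply Rdiv_lt_0_compat; lra).
    rewrite E1. pattern c at 1; rewrite E2. split; intro H.
    - apply Rmult_gt_reg_l with (lambda_max / lambda); lra.
    - apply Rmult_gt_compat_l; lra. }
  unfold battery_r in Hfix.
  destruct (Rle_dec (p / (1 - Pb)) 1) as [Hle|Hgt].
  - rewrite Rmin_left in Hfix by lra.
    assert (Hpx : p <= 1 - Pb).
    { apply Rmult_le_compat_r with (r := 1 - Pb) in Hle; [|lra].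
      replace (p / (1 - Pb) * (1 - Pb)) with p in Hle by (field; lra). lra. }
    replace (lambda * (1 - Pb) * (p / (1 - Pb)) / lambda_max) with (p * lambda / lambda_max) in Hfix by (field; lra).
    split; intro H; [exact Hfix|].
    assert (H2 : ~ (- ln p > p * lambda / lambda_max)) by (intro H3; apply H; apply Hc; exact H3).
    assert (H3 : exp (- (p * lambda / lambda_max)) <= p).
    { rewrite <- (exp_ln p Hp0) at 2. destruct (Rle_dec (- (p * lambda / lambda_max)) (ln p)) as [h|h].
      - destruct h as [h|h]; [left; apply exp_increasing; exact h| right; rewrite h; reflexivity].
      - exfalso; apply H2; lra. }
    assert (Heq : p = 1 - Pb) by lra.
    rewrite Heq in Hfix.
    replace (- ((1 - Pb) * lambda / lambda_max)) with (- (lambda * (1 - Pb) / lambda_max)) in Hfix by (field; lra).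
    exact Hfix.
  - assert (Hpx : 1 - Pb < p).
    { destruct (Rle_dec p (1 - Pb)) as [h|h]; [|lra]. exfalso; apply Hgt.
      apply Rmult_le_reg_r with (1 - Pb); [lra|].
      replace (p / (1 - Pb) * (1 - Pb)) with p by (field; lra). lra. }
    rewrite Rmin_right in Hfix by lra.
    rewrite Rmult_1_r in Hfix.
    split; intro H; [|exact Hfix].
    exfalso. apply Hc in H.
    assert (H1 : p < exp (- (p * lambda / lambda_max))).
    { rewrite <- (exp_ln p Hp0) at 1. apply exp_increasing. lra. }
    assert (H2 : exp (- (p * lambda / lambda_max)) < exp (- (lambda * (1 - Pb) / lambda_max))).
    { apply exp_increasing.
      assert (lambda * (1 - Pb) / lambda_max < p * lambda / lambda_max); [|lra].
      unfold Rdiv. apply Rmult_lt_compat_r; [apply Rinv_0_lt_compat; lra|]. nra. }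
    lra.
Qed.
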